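(* Let $n \ge 3$ and let $S$ be a $4$-cap free and $n$-cup free configuration with a fixed slope labeling $s$, and let $\alpha(p)=\alpha_1(p)$ and $\beta(p)=\alpha_2(p)$ be its $\alpha$-statistic. For any two distinct points $p, q$ with $\beta(p)=\beta(q)$: the edge joining $p$ and $q$ has label $1$, and $p<q$ if and only if $\alpha(p)<\alpha(q)$. For any two distinct points $p,q$ with $\alpha(p)=\alpha(q)$: the edge joining $p$ and $q$ has label $2$, and $p<q$ if and only if $\beta(p)<\beta(q)$.
   Context: A configuration is a finite set $S$ of points with a linear order $<$ and, for every $3$-element subset, an arbitrary assignment declaring it either a cap or a cup. Points $x_1<\cdots<x_a$ form an $a$-cup (resp. $a$-cap) if every consecutive triple $\{x_{i-1},x_i,x_{i+1}\}$, $1<i<a$, is assigned cup (resp. cap); $1$- and $2$-element sets are both caps and cups. The length of a cup is its number of points; a cup $x_1\cdots x_a$ with $a\ge 2$ ends with the point $x_a$ and the edge $x_{a-1}x_a$. An edge is a pair $x<y$, written $xy$. A slope labeling of a $4$-cap free configuration is an assignment $s(xy)\in\{1,2\}$ to every edge such that for any $x<y<z$, $s(xy)\le s(yz)$ implies $\{x,y,z\}$ is a $3$-cup. For $p\in S$, $\alpha(p)$ is the maximum length of a cup ending with $p$ and with an edge of label $1$ ($\alpha(p)=1$ if none), and $\beta(p)$ is the maximum length of a cup ending with $p$. *)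

(* Defs.v *)
From mathcomp Require Import all_boot.
Set Implicit Arguments. Unset Strict Implicit. Unset Printing Implicit Defensive.

(* A configuration on N points: the points are 'I_N with their natural
   (linear) order; [cupf x y z] (meaningful for x < y < z) says the triple
   {x,y,z} is a cup; otherwise it is a cap. *)
Section Config.
Variable N : nat.
Variable cupf : 'I_N -> 'I_N -> 'I_N -> bool.

Fixpoint cupchain (c : seq 'I_N) : bool :=
  match c with
  | x :: ((y :: z :: _) as r) => cupf x y z && cupchain r
  | _ => true
  end.
Fixpoint capchain (c : seq 'I_N) : bool :=
  match c with
  | x :: ((y :: z :: _) as r) => ~~ cupf x y z && capchain r
  | _ => true
  end.

Definition increasing (c : seq 'I_N) : bool := sorted (fun x y : 'I_N => x < y) c.

Definition is_cup (c : seq 'I_N) : bool := increasing c && cupchain c.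
Definition is_cap (c : seq 'I_N) : bool := increasing c && capchain c.

Definition cap_free (a : nat) : Prop := forall c, size c = a -> ~~ is_cap c.
Definition cup_free (a : nat) : Prop := forall c, size c = a -> ~~ is_cup c.

Definition slope_labeling (s : 'I_N -> 'I_N -> nat) : Prop :=
  (forall x y : 'I_N, x < y -> s x y = 1 \/ s x y = 2) /\
  (forall x y z : 'I_N, x < y -> y < z -> s x y <= s y z -> cupf x y z).

Definition edge_label (s : 'I_N -> 'I_N -> nat) (p q : 'I_N) : nat :=
  if p < q then s p q else s q p.

Definition cup_ending (p : 'I_N) (k : nat) : bool :=
  [exists t : k.-tuple 'I_N, is_cup t && (last p t == p) && (0 < k)].

Definition cup_ending1 (s : 'I_N -> 'I_N -> nat) (p : 'I_N) (k : nat) : bool :=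
  [exists t : k.-tuple 'I_N,
     [&& is_cup t, 1 < k, last p t == p & s (nth p t k.-2) p == 1]].

(* cups have length at most N, so maxima over k < N.+2 suffice *)
Definition beta (p : 'I_N) : nat :=
  \max_(k < N.+2 | cup_ending p k) k.
Definition alpha (s : 'I_N -> 'I_N -> nat) (p : 'I_N) : nat :=
  maxn 1 (\max_(k < N.+2 | cup_ending1 s p k) k).
End Config.

(* Main.v *)
Require Import Defs.
From mathcomp Require Import all_boot.
Set Implicit Arguments. Unset Strict Implicit.

Lemma cupchain_L N (cupf : 'I_N -> 'I_N -> 'I_N -> bool) q c :
  forall x y, cupchain cupf (x :: rcons (rcons c y) q) =
    cupchain cupf (x :: rcons c y) && cupf (last x c) y q.
Proof.
elim: c => [|a c IH] x y /=; first by rewrite andbT.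
case: c IH => [|b c] IH /=.
  by rewrite !andbT.
move: (IH a y) => /= ->. by rewrite andbA.
Qed.

Lemma cup_ext N (cupf : 'I_N -> 'I_N -> 'I_N -> bool) c (p q : 'I_N) :
  is_cup cupf (rcons c p) -> p < q ->
  (c = [::] \/ cupf (last p c) p q) ->
  is_cup cupf (rcons (rcons c p) q).
Proof.
case: c => [|a c].
  by move=> _ pq _; rewrite /is_cup /increasing /= pq.
have E : forall x (l : seq 'I_N), rcons (a :: l) x = a :: rcons l x by [].
rewrite /is_cup /increasing !E => /andP[H1 H2] pq [//|H3].
apply/andP; split; last by rewrite cupchain_L H2 H3.
by move: H1; rewrite /= !rcons_path ?last_rcons pq !andbT.
Qed.

Lemma cup_last_lt N (cupf : 'I_N -> 'I_N -> 'I_N -> bool) c (p : 'I_N) :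
  is_cup cupf (rcons c p) -> c != [::] -> last p c < p.
Proof.
case: c => [|a c] //= /andP[H _] _.
by move: H; rewrite /increasing /= rcons_path => /andP[_].
Qed.

Lemma cup_size N (cupf : 'I_N -> 'I_N -> 'I_N -> bool) c :
  is_cup cupf c -> size c <= N.
Proof.
case/andP=> H _.
have U : uniq c.
  apply: (sorted_uniq _ _ H).
  - by move=> y x z; apply: ltn_trans.
  - by move=> x; rewrite /= ltnn.
apply: leq_trans (uniq_leq_size (s2 := enum 'I_N) U _) _; last by rewrite size_enum_ord.
by move=> x _; rewrite mem_enum.
Qed.

Lemma beta_ge N (cupf : 'I_N -> 'I_N -> 'I_N -> bool) c (p : 'I_N) :
  is_cup cupf (rcons c p) -> size (rcons c p) <= beta cupf p.
Proof.
move=> H.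
have Hs : size (rcons c p) < N.+2 by rewrite ltnS; apply: leq_trans (cup_size H) (leqnSn N).
rewrite /beta.
apply: (@leq_bigmax_cond _ (fun k : 'I_N.+2 => cup_ending cupf p k) (fun k => nat_of_ord k) (Ordinal Hs)).
rewrite /cup_ending /cup_ending1; apply/existsP; exists (in_tuple (rcons c p)).
by rewrite /= H last_rcons eqxx size_rcons.
Qed.

Lemma beta_wit N (cupf : 'I_N -> 'I_N -> 'I_N -> bool) (p : 'I_N) :
  exists c, is_cup cupf (rcons c p) /\ size (rcons c p) = beta cupf p.
Proof.
have := @eq_bigmax_cond _ [pred k : 'I_N.+2 | cup_ending cupf p k] (fun k => nat_of_ord k).
case.
  apply/card_gt0P; exists (@Ordinal N.+2 1 isT); rewrite inE.
  rewrite /cup_ending /=; apply/existsP; exists [tuple p].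
  by rewrite /is_cup /increasing /= eqxx.
move=> k; rewrite inE => /existsP[t /andP[/andP[Hc Hl] Hk]] E.
exists (belast (head p t) (behead t)).
have Ht : t = rcons (belast (head p t) (behead t)) p :> seq _.
  case: t Hc Hl {E} => [[|a l] /= Hsz] //; first by move: Hk; rewrite -(eqP Hsz).
  by move=> _ /eqP <-; rewrite -lastI.
rewrite -Ht Hc; split => //.
by rewrite size_tuple /beta E.
Qed.

Lemma alpha_ge N (cupf : 'I_N -> 'I_N -> 'I_N -> bool) s c (p : 'I_N) :
  c != [::] -> is_cup cupf (rcons c p) -> s (last p c) p = 1 ->
  size (rcons c p) <= alpha cupf s p.
Proof.
move=> Hn H Hs1.
have Hs : size (rcons c p) < N.+2 by rewrite ltnS; apply: leq_trans (cup_size H) (leqnSn N).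
rewrite /alpha; apply: leq_trans (leq_maxr _ _).
apply: (@leq_bigmax_cond _ (fun k : 'I_N.+2 => cup_ending1 cupf s p k) (fun k => nat_of_ord k) (Ordinal Hs)).
rewrite /cup_ending /cup_ending1; apply/existsP; exists (in_tuple (rcons c p)).
rewrite /= H last_rcons eqxx size_rcons ltnS lt0n size_eq0 Hn /=.
rewrite nth_rcons.
case: c Hn H Hs1 {Hs} => [|a l] //= _ _ Hs1.
by rewrite ltnSn -[size l]/((size (a :: l)).-1) nth_last /= Hs1.
Qed.

Lemma alpha_wit N (cupf : 'I_N -> 'I_N -> 'I_N -> bool) s (p : 'I_N) :
  alpha cupf s p = 1 \/ exists c, [/\ c != [::], is_cup cupf (rcons c p),
    s (last p c) p = 1 & size (rcons c p) = alpha cupf s p].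
Proof.
case: (boolP [exists k : 'I_N.+2, cup_ending1 cupf s p k]) => [/existsP[k0 Hk0]|Hn].
  right.
  have := @eq_bigmax_cond _ [pred k : 'I_N.+2 | cup_ending1 cupf s p k] (fun k => nat_of_ord k).
  case.
    by apply/card_gt0P; exists k0; rewrite inE.
  move=> k; rewrite inE => /existsP[t /and4P[Hc Hk Hl Hs]] E.
  have Ea : alpha cupf s p = k by rewrite /alpha E; apply/maxn_idPr; apply: ltnW.
  exists (belast (head p t) (behead t)).
  have Ht : t = rcons (belast (head p t) (behead t)) p :> seq _.
    case: t Hc Hl Hs {E} => [[|a l] /= Hsz] //; first by move: Hk; rewrite -(eqP Hsz).
    by move=> _ /eqP <-; rewrite -lastI.
  set c := belast (head p t) (behead t) in Ht *.
  have Hsz : size c = k.-1 by rewrite size_belast size_behead size_tuple.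
  split.
  - by rewrite -size_eq0 Hsz; case: (nat_of_ord k) Hk => [|[|]].
  - by rewrite -Ht.
  - move: Hs; rewrite Ht nth_rcons Hsz.
    have Hk2 : k.-2 < k.-1 by case: (nat_of_ord k) Hk => [|[|m]].
    by rewrite Hk2 -Hsz nth_last => /eqP.
  - by rewrite -Ht size_tuple Ea.
left; rewrite /alpha big1 //.
move=> k Hk; move: Hn; rewrite negb_exists => /forallP/(_ k).
by rewrite Hk.
Qed.

Lemma beta_lt N (cupf : 'I_N -> 'I_N -> 'I_N -> bool) s (p q : 'I_N) :
  slope_labeling cupf s -> p < q -> s p q = 2 -> beta cupf p < beta cupf q.
Proof.
move=> [S1 S2] pq Hpq.
have [c [Hc <-]] := beta_wit cupf p.
rewrite -ltnS -(size_rcons (rcons c p) q) ltnS.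
apply: beta_ge; apply: (cup_ext Hc pq).
case: (eqVneq c [::]) => [->|Hn]; [by left|right].
have Hl := cup_last_lt Hc Hn.
apply: (S2 _ _ _ Hl pq); rewrite Hpq.
by case: (S1 _ _ Hl) => ->.
Qed.

Lemma alpha_lt N (cupf : 'I_N -> 'I_N -> 'I_N -> bool) s (p q : 'I_N) :
  slope_labeling cupf s -> p < q -> s p q = 1 -> alpha cupf s p < alpha cupf s q.
Proof.
move=> [S1 S2] pq Hpq.
case: (alpha_wit cupf s p) => [->|[c [Hn Hc Hs <-]]].
  have : size (rcons [:: p] q) <= alpha cupf s q.
    apply: alpha_ge => //=; last by rewrite /is_cup /increasing /= pq.
  by [].
rewrite -ltnS -(size_rcons (rcons c p) q) ltnS.
apply: alpha_ge; first by case: (c).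
- apply: (cup_ext Hc pq).
  right; have Hl := cup_last_lt Hc Hn.
  by apply: (S2 _ _ _ Hl pq); rewrite Hpq Hs.
- by rewrite last_rcons.
Qed.

Theorem corollary4p3 (N n : nat) (cupf : 'I_N -> 'I_N -> 'I_N -> bool)
  (s : 'I_N -> 'I_N -> nat) :
  3 <= n ->
  cap_free cupf 4 -> cup_free cupf n ->
  slope_labeling cupf s ->
  forall p q : 'I_N, p != q ->
    (beta cupf p = beta cupf q ->
       edge_label s p q = 1 /\ (p < q <-> alpha cupf s p < alpha cupf s q)) /\
    (alpha cupf s p = alpha cupf s q ->
       edge_label s p q = 2 /\ (p < q <-> beta cupf p < beta cupf q)).
Proof.
move=> _ _ _ SL p q Hpq.
have S1 := SL.1.
rewrite /edge_label.
have [pq|qp] : p < q \/ q < p.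
  case: (ltngtP p q) => [H|H|E]; [by left|by right|]; by move: Hpq; rewrite (val_inj E) eqxx.
- rewrite pq; split.
    move=> Eb; have Hs : s p q = 1.
      case: (S1 _ _ pq) => // H; have := beta_lt SL pq H; by rewrite Eb ltnn.
    by split => //; split => // _; apply: alpha_lt SL pq Hs.
  move=> Ea; have Hs : s p q = 2.
    case: (S1 _ _ pq) => // H; have := alpha_lt SL pq H; by rewrite Ea ltnn.
  by split => //; split => // _; apply: beta_lt SL pq Hs.
- have npq : (p < q) = false by apply/negbTE; rewrite -leqNgt ltnW.
  rewrite npq; split.
    move=> Eb; have Hs : s q p = 1.
      case: (S1 _ _ qp) => // H; have := beta_lt SL qp H; by rewrite Eb ltnn.
    split => //; split => // H; have := alpha_lt SL qp Hs.
    by rewrite ltnNge (ltnW H).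
  move=> Ea; have Hs : s q p = 2.
    case: (S1 _ _ qp) => // H; have := alpha_lt SL qp H; by rewrite Ea ltnn.
  split => //; split => // H; have := beta_lt SL qp Hs.
  by rewrite ltnNge (ltnW H).
Qed.
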